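(* Let $\gamma\geq0$ and $G=(V,E,\omega)\in\mathcal C_\gamma$, and assume $r=0$. Define, for $i,j\in V$, $\tilde\omega_{ij}:=-d_j^r\sum_{m=1}^{n-1}\Lambda_m\phi^m_i\phi^m_j$ if $i\neq j$ and $\tilde\omega_{ii}:=0$. Let $\tilde E\subset V^2$ contain the undirected edge $(i,j)$ if and only if $\tilde\omega_{ij}>0$. Then $\tilde G=(V,\tilde E,\tilde\omega)\in\mathcal G$. Moreover, if $\tilde\Delta$ denotes the graph Laplacian on $\tilde G$ with parameter $\tilde r=0$, i.e. $(\tilde\Delta u)_i=\sum_{j}\tilde\omega_{ij}(u_i-u_j)$, then $\tilde\Delta=L$.
   Context: $\mathcal{G}$ is the set of finite, simple, connected, undirected, edge-weighted graphs $G=(V,E,\omega)$ with $V=\{1,\dots,n\}$, $n\geq2$, weights $\omega_{ij}=\omega_{ji}>0$ for $(i,j)\in E$ and $\omega_{ij}=0$ otherwise. $d_i=\sum_j\omega_{ij}$. $\mathcal V$: functions $V\to\mathbb R$. With parameter $r\in[0,1]$: $\langle u,v\rangle_{\mathcal V}=\sum_id_i^ru_iv_i$, $(\Delta u)_i=d_i^{-r}\sum_j\omega_{ij}(u_i-u_j)$, $\mathcal M(u)=\sum_id_i^ru_i$, $\mathrm{vol}(V)=\sum_id_i^r$, $\mathcal A(u)=\frac{\mathcal M(u)}{\mathrm{vol}(V)}\chi_V$ ($\chi_S$ is the indicator of $S$). For $u\in\mathcal V$, let $\varphi$ be the unique solution of $\Delta\varphi=u-\mathcal A(u)$, $\mathcal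 M(\varphi)=0$, and $Lu:=\Delta u+\gamma\varphi$. Let $0=\lambda_0<\lambda_1\leq\dots\leq\lambda_{n-1}$ be the eigenvalues of $\Delta$ with $\langle\cdot,\cdot\rangle_{\mathcal V}$-orthonormal eigenfunctions $\phi^0=\mathrm{vol}(V)^{-1/2}\chi_V,\phi^1,\dots,\phi^{n-1}$, and $\Lambda_0=0$, $\Lambda_m=\lambda_m+\gamma/\lambda_m$ ($m\geq1$). Equilibrium measure: for a proper subset $S\subsetneq V$, $\nu^S$ is the unique $\nu\in\mathcal V$ with $(\Delta\nu)_i=1$ for $i\in S$ and $\nu_i=0$ for $i\notin S$. For $j\in V$, $f^j:=\nu^{V\setminus\{j\}}-\mathcal A(\nu^{V\setminus\{j\}})$. Classes: $\mathcal C^0=\{G\in\mathcal G:\forall j\in V\ \forall i\in V\setminus\{j\}:\ \omega_{ij}>0\text{ or }f^j_i\geq0\}$; for $\gamma>0$, $\mathcal C_\gamma=\{G\in\mathcal C^0:\forall j\ \forall i\neq j:\ \omega_{ij}=0\text{ or }d_i^{-r}\omega_{ij}+\gamma\frac{d_j^r}{\mathrm{vol}(V)}f^j_i>0\}$; and $\mathcal C_0:=\mathcal G$. *)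

(* Defs.v *)
From HB Require Import structures.
From mathcomp Require Import all_boot all_order all_algebra.
From mathcomp Require Import all_classical all_reals.
From mathcomp Require Import exp.
Set Implicit Arguments. Unset Strict Implicit. Unset Printing Implicit Defensive.
Import Order.TTheory GRing.Theory Num.Theory.
Local Open Scope ring_scope.

Section GraphDefs.
Variables (R : realType) (n : nat).

(* Vertex set V = {0,...,n-1} = 'I_n; an edge-weighted graph is given by its
   weight function w; the edge set is E = {(i,j) | w i j > 0}. *)
Definition weight := 'I_n -> 'I_n -> R.
Definition vfun := 'I_n -> R.

Definition is_graph (w : weight) : Prop :=
  [/\ (2 <= n)%N,
      (forall i j, w i j = w j i),
      (forall i, w i i = 0),
      (forall i j, 0 <= w i j) &
      (forall i j, connect (fun a b => 0 < w a b) i j)].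

Definition deg (w : weight) (i : 'I_n) : R := \sum_(j < n) w i j.

Definition degr (r : R) (w : weight) (i : 'I_n) : R := (deg w i) `^ r.

Definition inner (r : R) (w : weight) (u v : vfun) : R :=
  \sum_(i < n) degr r w i * u i * v i.

Definition lap (r : R) (w : weight) (u : vfun) : vfun :=
  fun i => (degr r w i)^-1 * \sum_(j < n) w i j * (u i - u j).

Definition mass (r : R) (w : weight) (u : vfun) : R :=
  \sum_(i < n) degr r w i * u i.

Definition vol (r : R) (w : weight) : R := \sum_(i < n) degr r w i.

Definition avg (r : R) (w : weight) (u : vfun) : vfun :=
  fun _ => mass r w u / vol r w.

Definition is_potential (r : R) (w : weight) (u phi : vfun) : Prop :=
  (forall i, lap r w phi i = u i - avg r w u i) /\ mass r w phi = 0.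

Definition potential (r : R) (w : weight) (u : vfun) : vfun :=
  xget (fun _ => 0) [set phi | is_potential r w u phi].

Definition Lop (r gamma : R) (w : weight) (u : vfun) : vfun :=
  fun i => lap r w u i + gamma * potential r w u i.

Definition is_eqmeasure (r : R) (w : weight) (S : {set 'I_n}) (nu : vfun) : Prop :=
  (forall i, i \in S -> lap r w nu i = 1) /\ (forall i, i \notin S -> nu i = 0).

Definition eqmeasure (r : R) (w : weight) (S : {set 'I_n}) : vfun :=
  xget (fun _ => 0) [set nu | is_eqmeasure r w S nu].

Definition fj (r : R) (w : weight) (j : 'I_n) : vfun :=
  fun i => eqmeasure r w [set~ j] i - avg r w (eqmeasure r w [set~ j]) i.

Definition inC0 (r : R) (w : weight) : Prop :=
  is_graph w /\
  forall j i : 'I_n, i != j -> 0 < w i j \/ 0 <= fj r w j i.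

Definition inCgamma (r gamma : R) (w : weight) : Prop :=
  if gamma == 0 then is_graph w
  else inC0 r w /\
       forall j i : 'I_n, i != j ->
         w i j = 0 \/
         0 < (degr r w i)^-1 * w i j + gamma * (degr r w j / vol r w) * fj r w j i.

Definition bigLambda (gamma : R) (lam : 'I_n -> R) (m : 'I_n) : R :=
  if (m == 0 :> nat) then 0 else lam m + gamma / lam m.

Definition is_spectral (r : R) (w : weight) (lam : 'I_n -> R) (phi : 'I_n -> vfun) : Prop :=
  [/\ (forall m : 'I_n, (m == 0 :> nat) -> lam m = 0 /\ phi m = (fun _ => (Num.sqrt (vol r w))^-1)),
      (forall m : 'I_n, (0 < m)%N -> 0 < lam m),
      (forall m k : 'I_n, (m <= k)%N -> lam m <= lam k),
      (forall m i, lap r w (phi m) i = lam m * phi m i) &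
      (forall m k, inner r w (phi m) (phi k) = (m == k)%:R)].

Definition wtilde (r gamma : R) (w : weight) (lam : 'I_n -> R) (phi : 'I_n -> vfun) : weight :=
  fun i j => if i == j then 0
    else - (degr r w j * \sum_(m < n | (0 < m)%N) bigLambda gamma lam m * phi m i * phi m j).

End GraphDefs.

(* Main.v *)
Require Import Defs.
From HB Require Import structures.
From mathcomp Require Import all_boot all_order all_algebra.
From mathcomp Require Import all_classical all_reals.
From mathcomp Require Import exp.
From mathcomp Require Import ring lra.
Import Order.TTheory GRing.Theory Num.Theory.
Local Open Scope ring_scope.

Set Implicit Arguments. Unset Strict Implicit.


Lemma degr0 (R : realType) n (w : weight R n) i : degr 0 w i = 1.
Proof. by rewrite /degr powRr0. Qed.

Lemma lap0E (R : realType) n (w : weight R n) u i :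
  lap 0 w u i = \sum_j w i j * (u i - u j).
Proof. by rewrite /lap degr0 invr1 mul1r. Qed.

Lemma mass0E (R : realType) n (w : weight R n) u : mass 0 w u = \sum_i u i.
Proof. by rewrite /mass; apply: eq_bigr => i _; rewrite degr0 mul1r. Qed.

Lemma vol0E (R : realType) n (w : weight R n) : vol 0 w = n%:R.
Proof.
rewrite /vol (eq_bigr (fun _ => 1)) => [|i _]; last by rewrite degr0.
by rewrite sumr_const card_ord.
Qed.

Lemma inner0E (R : realType) n (w : weight R n) u v :
  inner 0 w u v = \sum_i u i * v i.
Proof. by rewrite /inner; apply: eq_bigr => i _; rewrite degr0 mul1r. Qed.

Lemma sum_delta (R : realType) n (F : 'I_n -> R) k :
  \sum_m F m * (m == k)%:R = F k.
Proof.
rewrite (bigD1 k) //= eqxx mulr1 big1 ?addr0 // => m /negbTE ->.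
by rewrite mulr0.
Qed.

Lemma sum_delta' (R : realType) n (F : 'I_n -> R) k :
  \sum_m F m * (k == m)%:R = F k.
Proof.
rewrite -(sum_delta F k); apply: eq_bigr => m _; by rewrite eq_sym.
Qed.

Definition coef (R : realType) n (phi : 'I_n -> vfun R n) (u : vfun R n) m :=
  \sum_k phi m k * u k.


Lemma ortho (R : realType) n (w : weight R n) lam phi :
  is_spectral 0 w lam phi -> forall m k, \sum_i phi m i * phi k i = (m == k)%:R.
Proof. by case=> _ _ _ _ Hon m k; rewrite -Hon inner0E. Qed.

Lemma complete (R : realType) n (w : weight R n) lam phi :
  is_spectral 0 w lam phi -> forall i j, \sum_m phi m i * phi m j = (i == j)%:R.
Proof.
move=> Hs i j.
pose P : 'M[R]_n := \matrix_(m, i) phi m i.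
have : P *m P^T = 1%:M.
  apply/matrixP => m k; rewrite !mxE -(ortho Hs m k).
  by apply: eq_bigr => l _; rewrite !mxE.
move/mulmx1C => /matrixP/(_ i j); rewrite !mxE => <-.
by apply: eq_bigr => l _; rewrite !mxE.
Qed.

Lemma expand (R : realType) n (w : weight R n) lam phi :
  is_spectral 0 w lam phi -> forall u i, u i = \sum_m coef phi u m * phi m i.
Proof.
move=> Hs u i.
transitivity (\sum_k u k * \sum_m phi m k * phi m i).
  rewrite (bigD1 i) //= (complete Hs) eqxx mulr1 big1 ?addr0 // => k /negbTE.
  by rewrite (complete Hs) => ->; rewrite mulr0.
rewrite /coef; under [RHS]eq_bigr do rewrite mulr_suml.
rewrite exchange_big; apply: eq_bigr => k _; rewrite mulr_sumr.
by apply: eq_bigr => m _; ring.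
Qed.

Lemma coef_sum (R : realType) n (w : weight R n) lam phi :
  is_spectral 0 w lam phi -> forall (a : 'I_n -> R) k,
  \sum_i phi k i * (\sum_m a m * phi m i) = a k.
Proof.
move=> Hs a k.
transitivity (\sum_m a m * \sum_i phi k i * phi m i).
  under eq_bigr do rewrite mulr_sumr.
  rewrite exchange_big; apply: eq_bigr => m _; rewrite mulr_sumr.
  by apply: eq_bigr => i _; ring.
under eq_bigr do rewrite (ortho Hs).
exact: sum_delta'.
Qed.

Lemma lap_expand (R : realType) n (w : weight R n) lam phi :
  is_spectral 0 w lam phi -> forall u i,
  lap 0 w u i = \sum_m lam m * coef phi u m * phi m i.
Proof.
move=> Hs u i; have Heig := Hs; case: Heig => _ _ _ Heig _.
rewrite lap0E.
transitivity (\sum_j w i j * \sum_m coef phi u m * (phi m i - phi m j)).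
  apply: eq_bigr => j _; congr (_ * _).
  rewrite {1}(expand Hs u i) (expand Hs u j) -sumrB.
  by apply: eq_bigr => m _; ring.
under eq_bigr do rewrite mulr_sumr.
rewrite exchange_big; apply: eq_bigr => m _.
have := Heig m i; rewrite lap0E => Hm.
transitivity (coef phi u m * \sum_j w i j * (phi m i - phi m j)).
  by rewrite mulr_sumr; apply: eq_bigr => j _; ring.
by rewrite Hm; ring.
Qed.


Lemma phi0_sq (R : realType) n (w : weight R n) lam phi :
  is_spectral 0 w lam phi -> (0 < n)%N -> forall m : 'I_n, (m : nat) = 0%N ->
  forall i j, phi m i * phi m j = n%:R^-1.
Proof.
case=> H0 _ _ _ _ n0 m /eqP m0 i j.
have [_ ->] := H0 m m0; rewrite vol0E -expr2 exprVn sqr_sqrtr // ler0n.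
Qed.

Lemma phi0_const (R : realType) n (w : weight R n) lam phi :
  is_spectral 0 w lam phi -> forall m : 'I_n, (m : nat) = 0%N ->
  forall i j, phi m i = phi m j.
Proof. by case=> H0 _ _ _ _ m /eqP m0 i j; have [_ ->] := H0 m m0. Qed.

Lemma lam0 (R : realType) n (w : weight R n) lam phi :
  is_spectral 0 w lam phi -> forall m : 'I_n, (m : nat) = 0%N -> lam m = 0.
Proof. by case=> H0 _ _ _ _ m /eqP m0; have [-> _] := H0 m m0. Qed.

Lemma lam_pos (R : realType) n (w : weight R n) lam phi :
  is_spectral 0 w lam phi -> forall m : 'I_n, (m : nat) != 0%N -> 0 < lam m.
Proof. by case=> _ Hp _ _ _ m m0; apply: Hp; rewrite lt0n. Qed.

Lemma sum_phi (R : realType) n (w : weight R n) lam phi :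
  is_spectral 0 w lam phi -> (0 < n)%N -> forall m : 'I_n, (m : nat) != 0%N ->
  \sum_i phi m i = 0.
Proof.
move=> Hs n0 m mne.
pose m0 : 'I_n := Ordinal n0.
have := ortho Hs m0 m.
have -> : (m0 == m) = false.
  by apply/negbTE; apply: contra mne => /eqP <-.
have E : forall i, phi m0 i = phi m0 m0 by move=> i; apply: (phi0_const Hs).
under eq_bigr do rewrite E.
rewrite -mulr_sumr => /eqP; rewrite mulf_eq0 => /orP[|/eqP //].
move=> /eqP h; have := phi0_sq Hs n0 (m:=m0) erefl m0 m0.
by rewrite h mul0r => /esym/eqP; rewrite invr_eq0 pnatr_eq0 => /eqP nz; exfalso; have := n0; by rewrite nz.
Qed.

Lemma lap_kernel (R : realType) n (w : weight R n) lam phi :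
  is_spectral 0 w lam phi -> forall chi,
  (forall i, lap 0 w chi i = 0) -> forall i j, chi i = chi j.
Proof.
move=> Hs chi Hc i j.
have Hk : forall k, lam k * coef phi chi k = 0.
  move=> k.
  have := coef_sum Hs (fun m => lam m * coef phi chi m) k.
  under eq_bigr do rewrite -(lap_expand Hs) Hc mulr0.
  by rewrite big1 // => _ _.
rewrite (expand Hs chi i) (expand Hs chi j); apply: eq_bigr => m _.
have [m0|mne] := eqVneq (m : nat) 0%N.
  by rewrite (phi0_const Hs m0 i j).
have := Hk m; move/eqP; rewrite mulf_eq0 => /orP[/eqP h|/eqP ->].
  by have := lam_pos Hs mne; rewrite h ltxx.
by rewrite !mul0r.
Qed.

Lemma lapB (R : realType) n (w : weight R n) (f g : vfun R n) i :
  lap 0 w (fun k => f k - g k) i = lap 0 w f i - lap 0 w g i.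
Proof. by rewrite !lap0E -sumrB; apply: eq_bigr => j _; ring. Qed.

Lemma lapZ (R : realType) n (w : weight R n) (a : R) (f : vfun R n) i :
  lap 0 w (fun k => a * f k) i = a * lap 0 w f i.
Proof. by rewrite !lap0E mulr_sumr; apply: eq_bigr => j _; ring. Qed.

Lemma lap_shift (R : realType) n (w : weight R n) (a : R) (f : vfun R n) i :
  lap 0 w (fun k => f k - a) i = lap 0 w f i.
Proof. by rewrite !lap0E; apply: eq_bigr => j _; ring. Qed.

Lemma const_zero (R : realType) n (f : vfun R n) :
  (0 < n)%N -> (forall i j, f i = f j) -> \sum_i f i = 0 -> forall i, f i = 0.
Proof.
move=> n0 Hc Hs i.
move: Hs; rewrite (eq_bigr (fun _ => f i)) => [|j _]; last by rewrite (Hc j i).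
rewrite sumr_const card_ord => /eqP; rewrite mulrn_eq0 => /orP[/eqP nz|/eqP //].
exfalso; have := n0; by rewrite nz.
Qed.

Definition psi (R : realType) n (lam : 'I_n -> R) (phi : 'I_n -> vfun R n) (u : vfun R n) : vfun R n :=
  fun i => \sum_(m < n) (if (0 < (m : nat))%N then coef phi u m / lam m else 0) * phi m i.

Lemma psi_pot (R : realType) n (w : weight R n) lam phi :
  is_spectral 0 w lam phi -> (0 < n)%N -> forall u,
  is_potential 0 w u (psi lam phi u).
Proof.
move=> Hs n0 u.
pose m0 : 'I_n := Ordinal n0.
have mpos : forall m : 'I_n, m != m0 -> (m : nat) != 0%N.
  by move=> m; apply: contra => /eqP h; apply/eqP/val_inj.
split.
  move=> i; rewrite (lap_expand Hs) /avg mass0E vol0E.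
  under eq_bigr do rewrite /coef -/(coef phi (psi lam phi u) _)
     [coef phi (psi lam phi u) _](coef_sum Hs).
  rewrite [u i](expand Hs u i).
  suff E : \sum_m coef phi u m * phi m i -
    \sum_m lam m * (if (0 < (m : nat))%N then coef phi u m / lam m else 0) * phi m i
    = (\sum_i0 u i0) / n%:R.
    by rewrite -E; ring.
  rewrite -sumrB (bigD1 m0) //= big1 ?addr0.
    rewrite /= mulr0 mul0r subr0 /coef mulr_suml mulr_suml.
    apply: eq_bigr => k _.
    by rewrite mulrAC (phi0_sq Hs n0 (m:=m0)) // mulrC.
  move=> m /mpos mne; rewrite lt0n mne.
  have := lam_pos Hs mne => lp.
  by rewrite mulrCA mulfV ?mulr1 ?subrr // gt_eqF.
rewrite mass0E /psi exchange_big big1 // => m _.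
have [m0'|mne] := eqVneq (m : nat) 0%N.
  by rewrite -mulr_sumr m0' /= mul0r.
by rewrite -mulr_sumr (sum_phi Hs n0 mne) mulr0.
Qed.

Lemma pot_eq (R : realType) n (w : weight R n) lam phi :
  is_spectral 0 w lam phi -> (0 < n)%N -> forall u,
  potential 0 w u = psi lam phi u.
Proof.
move=> Hs n0 u; apply: xget_unique; first exact: psi_pot.
move=> y [Hy My]; have [Hp Mp] := psi_pot Hs n0 u.
apply/funext => i; apply/eqP; rewrite -subr_eq0; apply/eqP.
apply: (const_zero (f := fun k => y k - psi lam phi u k)) => //.
  apply: (lap_kernel Hs) => k; by rewrite lapB Hy Hp subrr.
by rewrite sumrB -!(mass0E w) My Mp subrr.
Qed.


Lemma Lop_expand (R : realType) n (gamma : R) (w : weight R n) lam phi :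
  is_spectral 0 w lam phi -> (0 < n)%N -> forall u i,
  Lop 0 gamma w u i = \sum_m bigLambda gamma lam m * coef phi u m * phi m i.
Proof.
move=> Hs n0 u i.
rewrite /Lop (lap_expand Hs) (pot_eq Hs n0) /psi mulr_sumr -big_split.
apply: eq_bigr => m _ /=; rewrite /bigLambda.
have [m0|mne] := eqVneq (m : nat) 0%N.
  by rewrite m0 /= (lam0 Hs m0); ring.
rewrite lt0n mne; field.
by rewrite gt_eqF // (lam_pos Hs mne).
Qed.

Definition Kmat (R : realType) n (gamma : R) (lam : 'I_n -> R) (phi : 'I_n -> vfun R n) i k :=
  \sum_(m < n) bigLambda gamma lam m * phi m i * phi m k.

Lemma Lop_K (R : realType) n (gamma : R) (w : weight R n) lam phi :
  is_spectral 0 w lam phi -> (0 < n)%N -> forall u i,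
  Lop 0 gamma w u i = \sum_k Kmat gamma lam phi i k * u k.
Proof.
move=> Hs n0 u i; rewrite (Lop_expand _ Hs n0) /Kmat /coef.
transitivity (\sum_m \sum_k bigLambda gamma lam m * phi m i * phi m k * u k).
  by apply: eq_bigr => m _; rewrite mulr_sumr mulr_suml; apply: eq_bigr => k _; ring.
rewrite exchange_big; apply: eq_bigr => k _; rewrite mulr_suml.
by apply: eq_bigr => m _.
Qed.

Lemma K_row (R : realType) n (gamma : R) (w : weight R n) lam phi :
  is_spectral 0 w lam phi -> (0 < n)%N -> forall i,
  \sum_k Kmat gamma lam phi i k = 0.
Proof.
move=> Hs n0 i; rewrite /Kmat exchange_big big1 // => m _.
rewrite -mulr_sumr; have [m0|mne] := eqVneq (m : nat) 0%N.
  by rewrite /bigLambda m0 /= !mul0r.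
by rewrite (sum_phi Hs n0 mne) mulr0.
Qed.

Lemma wt_K (R : realType) n (gamma : R) (w : weight R n) lam phi i j :
  i != j -> wtilde 0 gamma w lam phi i j = - Kmat gamma lam phi i j.
Proof.
move=> ij; rewrite /wtilde (negbTE ij) degr0 mul1r big_mkcond /=; congr (- _).
apply: eq_bigr => m _; case: ifP => // /negbT; rewrite lt0n negbK /bigLambda => ->.
by rewrite !mul0r.
Qed.

Definition delta (R : realType) n (j : 'I_n) : vfun R n := fun k => (k == j)%:R.

Lemma lap_delta (R : realType) n (w : weight R n) i j :
  i != j -> lap 0 w (delta R j) i = - w i j.
Proof.
move=> ij; rewrite lap0E /delta (negbTE ij).
under eq_bigr do rewrite sub0r mulrN.
by rewrite sumrN sum_delta.
Qed.

Lemma K_G (R : realType) n (gamma : R) (w : weight R n) lam phi :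
  is_spectral 0 w lam phi -> (0 < n)%N -> forall i j, i != j ->
  Kmat gamma lam phi i j = - w i j + gamma * potential 0 w (delta R j) i.
Proof.
move=> Hs n0 i j ij.
transitivity (Lop 0 gamma w (delta R j) i).
  by rewrite (Lop_K _ Hs n0) /delta sum_delta.
by rewrite /Lop lap_delta.
Qed.

Lemma lap_sum0 (R : realType) n (w : weight R n) v :
  is_graph w -> \sum_i lap 0 w v i = 0.
Proof.
case=> _ Hsym _ _ _.
under eq_bigr do rewrite lap0E.
transitivity (\sum_i \sum_k w i k * v i - \sum_i \sum_k w i k * v k).
  rewrite -sumrB; apply: eq_bigr => i _; rewrite -sumrB.
  by apply: eq_bigr => k _; ring.
rewrite [X in _ - X]exchange_big /=.
apply/eqP; rewrite subr_eq0; apply/eqP; apply: eq_bigr => i _.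
by apply: eq_bigr => k _; rewrite Hsym.
Qed.

Lemma fj_eq (R : realType) n (w : weight R n) lam phi :
  is_graph w -> is_spectral 0 w lam phi -> (0 < n)%N -> forall j i,
  fj 0 w j i = - n%:R * potential 0 w (delta R j) i.
Proof.
move=> Hg Hs n0 j i.
have nz : n%:R != 0 :> R by rewrite pnatr_eq0 -lt0n.
set p := potential 0 w (delta R j).
have [Hp Mp] : is_potential 0 w (delta R j) p by rewrite /p (pot_eq Hs n0); exact: psi_pot.
pose g := fun k => - n%:R * p k.
pose nu := fun k => g k - g j.
have md : \sum_k delta R j k = 1.
  by rewrite -(sum_delta (fun _ => (1 : R)) j); apply: eq_bigr => k _; rewrite mul1r.
have Hnu : is_eqmeasure 0 w [set~ j] nu.
  split=> k; rewrite in_setC1.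
    move=> kj; rewrite /nu lap_shift /g lapZ Hp /avg mass0E vol0E md /delta (negbTE kj).
have -> : (false%:R : R) = 0 by [].     by field.
  by move=> /negPn /eqP ->; rewrite /nu subrr.
have Hu : eqmeasure 0 w [set~ j] = nu.
  apply: xget_unique => // y [Hy1 Hy2].
  have Lne : forall k, k != j -> lap 0 w y k = lap 0 w nu k.
    by move=> k kj; rewrite Hy1 ?Hnu.1 ?in_setC1.
  have Ly : forall k, lap 0 w y k = lap 0 w nu k.
    move=> k; have [->|kj] := eqVneq k j; last exact: Lne.
    have e1 := lap_sum0 y Hg; have e2 := lap_sum0 nu Hg.
    rewrite (bigD1 j) //= in e1; rewrite (bigD1 j) //= in e2.
    have e3 : \sum_(k0 < n | k0 != j) lap 0 w y k0 = \sum_(k0 < n | k0 != j) lap 0 w nu k0.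
      by apply: eq_bigr => k0; exact: Lne.
    rewrite e3 in e1; lra.
  apply/funext => k; apply/eqP; rewrite -subr_eq0; apply/eqP.
  have := lap_kernel Hs (chi := fun k => y k - nu k) (fun k => etrans (lapB _ _ _ _) (etrans (f_equal (fun x => x - _) (Ly k)) (subrr _))) k j.
  move=> ->; rewrite (Hy2 j); last by rewrite in_setC1 negbK.
  by rewrite /nu subrr subrr.
rewrite /fj Hu /avg mass0E vol0E /nu sumrB sumr_const card_ord /g -mulr_sumr.
rewrite -(mass0E w) Mp -mulr_natr.
by field.
Qed.

Unset Implicit Arguments. Set Strict Implicit.

Theorem theorem6p15 (R : realType) (n : nat) (gamma : R) (w : weight R n)
    (lam : 'I_n -> R) (phi : 'I_n -> vfun R n) :
  0 <= gamma ->
  inCgamma 0 gamma w ->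
  is_spectral 0 w lam phi ->
  is_graph (wtilde 0 gamma w lam phi) /\
  (forall u : vfun R n, lap 0 (wtilde 0 gamma w lam phi) u = Lop 0 gamma w u).
Proof.
move=> g0 HC Hs.
have Hg : is_graph w.
  by move: HC; rewrite /inCgamma; case: eqP => _ // [[]].
have n0 : (0 < n)%N by case: Hg => h *; exact: leq_trans h.
have nz : n%:R != 0 :> R by rewrite pnatr_eq0 -lt0n.
have nge : 0 < n%:R :> R by rewrite ltr0n.
have key : forall i j, i != j -> wtilde 0 gamma w lam phi i j
    = w i j - gamma * potential 0 w (delta R j) i.
  by move=> i j ij; rewrite wt_K // (K_G _ Hs n0) //; ring.
have wge : forall i j, 0 <= w i j by case: Hg.
have pos : forall i j, i != j -> 0 <= wtilde 0 gamma w lam phi i j /\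
    (0 < w i j -> 0 < wtilde 0 gamma w lam phi i j).
  move=> i j ij; rewrite key //.
  move: HC; rewrite /inCgamma; case: eqP => [-> _|gne [[_ HC0] HCg]].
    by rewrite mul0r subr0; split.
  have := HCg j i ij; rewrite !degr0 invr1 mul1r vol0E (fj_eq Hg Hs n0) => HCg'.
  have := HC0 j i ij; rewrite (fj_eq Hg Hs n0) => HC0'.
  set G := potential 0 w (delta R j) i in HCg' HC0' *.
  have E : gamma * (1 / n%:R) * (- n%:R * G) = - (gamma * G) by field.
  rewrite E in HCg'.
  have wij := wge i j.
  case: HCg' => [w0|hpos]; last by split; [lra | move=> _; lra].
  split; last by rewrite w0 ltxx.
  case: HC0' => [|h]; first by rewrite w0 ltxx.
  have hG : G <= 0.
    by rewrite mulNr oppr_ge0 pmulr_rle0 in h.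
  nra.
split.
  split.
  - by case: Hg.
  - move=> i j; rewrite /wtilde eq_sym; case: eqP => // _.
    rewrite !degr0 !mul1r; congr (- _); apply: eq_bigr => m _; ring.
  - by move=> i; rewrite /wtilde eqxx.
  - move=> i j; have [->|ij] := eqVneq i j; first by rewrite /wtilde eqxx.
    exact: (pos i j ij).1.
  - move=> i j; case: Hg => _ _ Hd _ Hc.
    apply: (connect_sub _ (Hc i j)) => a b hab; apply: connect1.
    have ab : a != b by apply/eqP => eab; rewrite eab Hd ltxx in hab.
    exact: (pos a b ab).2 hab.
move=> u; apply/funext => i.
rewrite lap0E (Lop_K _ Hs n0).
transitivity (\sum_k (- Kmat gamma lam phi i k) * (u i - u k)).
  apply: eq_bigr => k _; have [->|ik] := eqVneq i k; first by rewrite !subrr !mulr0.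
  by rewrite wt_K.
transitivity (\sum_k Kmat gamma lam phi i k * u k - u i * \sum_k Kmat gamma lam phi i k).
  by rewrite mulr_sumr -sumrB; apply: eq_bigr => k _; ring.
by rewrite (K_row _ Hs n0) mulr0 subr0.
Qed.
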